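(* Let $\alpha,\tau\colon\mathbb{R}\to\mathbb{R}$ be continuous, let $\eta(w)=w+\frac{\alpha(w)}{2}$, and suppose that $\frac{\alpha(s)-\alpha(t)}{s-t}\ge-2$ for all $s<t$, that $\eta(\mathbb{R})=\mathbb{R}$, and that $\mathrm{Lip}(\tau)<2$. Then there is a unique ruled intrinsic graph $\Sigma_{\tau,\alpha}$ with boundary $\partial\Sigma_{\tau,\alpha}=\gamma_\tau\cup X\gamma_\alpha$.
   Context: $\mathbb{H}$ is $\mathbb{R}^3$ with product $(x,y,z)\cdot(x',y',z')=(x+x',y+y',z+z'+\frac{xy'-yx'}{2})$; $X=(1,0,0)$, $Y^t=(0,t,0)$. A horizontal line is $\{p\cdot tv:t\in\mathbb{R}\}$, $v=(a,b,0)\ne0$; a ruled surface is a union of horizontal segments (rulings) with endpoints in its boundary. $V_0=\{(x,0,z)\}$; an intrinsic graph is a set $\Gamma_f=\{u\cdot Y^{f(u)}:u\in D\}$ for some $D\subset V_0$ and $f\colon D\to\mathbb{R}$. For $\phi\colon\mathbb{R}\to\mathbb{R}$, $\gamma_\phi=\{(0,\phi(z),z):z\in\mathbb{R}\}$ is its graph in the $yz$-plane, and $X\gamma_\alpha=\{X\cdot p:p\in\gamma_\alpha\}=\{(1,\alpha(z),z+\frac{\alpha(z)}2):z\in\mathbb{R}\}$. *)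

(* Defs.v *)
From Stdlib Require Import Reals Lra.
Open Scope R_scope.

(* The Heisenberg group H = R^3 with
   (x,y,z).(x',y',z') = (x+x', y+y', z+z'+(xy'-yx')/2). *)
Definition pt := (R * R * R)%type.
Definition mkpt (x y z : R) : pt := (x, y, z).
Definition px (p : pt) : R := fst (fst p).
Definition py (p : pt) : R := snd (fst p).
Definition pz (p : pt) : R := snd p.

Definition hmul (p q : pt) : pt :=
  mkpt (px p + px q) (py p + py q)
       (pz p + pz q + (px p * py q - py p * px q) / 2).

Definition Xpt : pt := mkpt 1 0 0.
Definition Ypow (t : R) : pt := mkpt 0 t 0.

Definition hset := pt -> Prop.

Definition hsegment (p : pt) (a b : R) : hset :=
  fun q => exists t, 0 <= t <= 1 /\ q = hmul p (mkpt (t * a) (t * b) 0).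

(* Intrinsic graph Gamma_f = { u . Y^{f(u)} : u in D }, D subset of V_0,
   where points of V_0 = {(x,0,z)} are parametrised by (x,z). *)
Definition intrinsic_graph (D : R -> R -> Prop) (f : R -> R -> R) : hset :=
  fun q => exists x z, D x z /\ q = hmul (mkpt x 0 z) (Ypow (f x z)).

Definition strip01 (x z : R) : Prop := 0 <= x <= 1.

Definition graph_boundary (S : hset) : hset :=
  fun q => S q /\ (px q = 0 \/ px q = 1).

Definition ruled (S bd : hset) : Prop :=
  forall q, S q -> exists p a b,
    (a, b) <> (0, 0) /\ bd p /\ bd (hmul p (mkpt a b 0)) /\
    (forall r, hsegment p a b r -> S r) /\ hsegment p a b q.

Definition gamma (phi : R -> R) : hset :=
  fun q => exists z, q = mkpt 0 (phi z) z.
Definition Xgamma (phi : R -> R) : hset :=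
  fun q => exists p, gamma phi p /\ q = hmul Xpt p.

Definition ruled_graph_with_boundary (tau alpha : R -> R) (S : hset) : Prop :=
  (exists f, forall q, S q <-> intrinsic_graph strip01 f q) /\
  (forall q, graph_boundary S q <-> (gamma tau q \/ Xgamma alpha q)) /\
  ruled S (graph_boundary S).

Definition lip_lt (tau : R -> R) (c : R) : Prop :=
  exists L, L < c /\ forall s t, Rabs (tau s - tau t) <= L * Rabs (s - t).

(* Main.v *)
Require Import Defs.
From Stdlib Require Import Reals.
From Stdlib Require Import Lra Psatz ClassicalEpsilon.
Open Scope R_scope.

Lemma pt_ext (p q : pt) : px p = px q -> py p = py q -> pz p = pz q -> p = q.
Proof. destruct p as [[a b] c], q as [[a' b'] c']; unfold px, py, pz; simpl; intros; subst; reflexivity. Qed.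

Lemma choice_fun {A B : Type} (P : A -> B -> Prop) :
  (forall a, exists b, P a b) -> exists f, forall a, P a (f a).
Proof.
  intros H. exists (fun a => proj1_sig (constructive_indefinite_description _ (H a))).
  intros a. exact (proj2_sig (constructive_indefinite_description _ (H a))).
Qed.

Lemma lip_cont (g : R -> R) k : 0 < k ->
  (forall x y, k * Rabs (g x - g y) <= Rabs (x - y)) -> continuity g.
Proof.
  intros Hk H x. unfold continuity_pt, continue_in, limit1_in, limit_in.
  intros eps Heps. exists (k * eps). split. apply Rmult_lt_0_compat; lra.
  intros y [_ Hy]. simpl in *. unfold R_dist in *.
  specialize (H y x).
  assert (k * Rabs (g y - g x) < k * eps) by lra.
  apply Rmult_lt_reg_l with k; lra.
Qed.

Definition sg (tau : R -> R) (s : R) := s - tau s / 2.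
Definition eta (alpha : R -> R) (w : R) := w + alpha w / 2.

Lemma eta_cont alpha : continuity alpha -> continuity (eta alpha).
Proof.
  intros Ha x. unfold eta.
  apply continuity_pt_plus. apply derivable_continuous_pt; apply derivable_pt_id.
  apply continuity_pt_mult. apply Ha. apply continuity_pt_const; intros a b; reflexivity.
Qed.

Lemma sg_cont tau : continuity tau -> continuity (sg tau).
Proof.
  intros Ha x. unfold sg.
  apply continuity_pt_minus. apply derivable_continuous_pt; apply derivable_pt_id.
  apply continuity_pt_mult. apply Ha. apply continuity_pt_const; intros a b; reflexivity.
Qed.

Theorem lemma3p6 (alpha tau : R -> R)
  (Halpha : continuity alpha) (Htau : continuity tau)
  (Hslope : forall s t, s < t -> (alpha s - alpha t) / (s - t) >= -2)
  (Heta : forall y, exists w, w + alpha w / 2 = y)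
  (Hlip : lip_lt tau 2) :
  (exists S, ruled_graph_with_boundary tau alpha S) /\
  (forall S1 S2, ruled_graph_with_boundary tau alpha S1 ->
     ruled_graph_with_boundary tau alpha S2 -> forall q, S1 q <-> S2 q).
Proof.
  destruct Hlip as [L [HL Hl]].
  assert (L0 : 0 <= L).
  { specialize (Hl 1 0). replace (1 - 0) with 1 in Hl by ring.
    rewrite Rabs_R1 in Hl. pose proof (Rabs_pos (tau 1 - tau 0)). lra. }
  set (k := 1 - L / 2).
  assert (Hk : 0 < k) by (unfold k; lra).
  assert (Hsg_mono : forall s t, s < t -> sg tau t - sg tau s >= k * (t - s)).
  { intros s t Hst. specialize (Hl t s). rewrite (Rabs_right (t - s)) in Hl by lra.
    pose proof (Rle_abs (tau t - tau s)).
    unfold sg, k. lra. }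
  assert (Hsg_surj : forall y, exists s, sg tau s = y).
  { intros y. set (d := Rabs (tau y) / k + 1).
    assert (Hd : k * d = Rabs (tau y) + k) by (unfold d; field; lra).
    assert (Hd0 : 0 < d) by (unfold d; pose proof (Rabs_pos (tau y));
      assert (0 <= Rabs (tau y) / k) by (apply Rmult_le_pos; [apply Rabs_pos | apply Rlt_le, Rinv_0_lt_compat; lra]); lra).
    pose proof (Hsg_mono y (y + d) ltac:(lra)).
    pose proof (Hsg_mono (y - d) y ltac:(lra)).
    pose proof (Rle_abs (tau y)). pose proof (Rle_abs (- tau y)). rewrite Rabs_Ropp in H2.
    replace (y + d - y) with d in H by ring. replace (y - (y - d)) with d in H0 by ring.
    unfold sg at 2 in H. unfold sg at 1 in H0.
    destruct (IVT (fun s => sg tau s - y) (y - d) (y + d)) as [s [_ Hs]].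
    - intro x. apply continuity_pt_minus. apply sg_cont; auto.
      apply continuity_pt_const; intros a b; reflexivity.
    - lra.
    - simpl. lra.
    - simpl. lra.
    - exists s. simpl in Hs. lra. }
  destruct (choice_fun _ Hsg_surj) as [g Hg].
  assert (Hsg_inj : forall s t, sg tau s = sg tau t -> s = t).
  { intros s t H. destruct (Rtotal_order s t) as [h|[h|h]]; auto.
    - pose proof (Hsg_mono s t h). pose proof (Rmult_lt_0_compat k (t - s) Hk ltac:(lra)). lra.
    - pose proof (Hsg_mono t s h). pose proof (Rmult_lt_0_compat k (s - t) Hk ltac:(lra)). lra. }
  assert (Hgsg : forall s, g (sg tau s) = s).
  { intros s. apply Hsg_inj. apply Hg. }
  assert (Hg_cont : continuity g).
  { apply (lip_cont g k Hk). intros y1 y2.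
    rewrite <- (Hg y1), <- (Hg y2), !Hgsg.
    set (s1 := g y1). set (s2 := g y2).
    destruct (Rtotal_order s1 s2) as [h|[h|h]].
    - pose proof (Hsg_mono s1 s2 h).
      rewrite (Rabs_left (s1 - s2)) by lra.
      pose proof (Rmult_lt_0_compat k (s2 - s1) Hk ltac:(lra)).
      rewrite (Rabs_left (sg tau s1 - sg tau s2)) by lra. lra.
    - rewrite h. replace (s2 - s2) with 0 by ring. rewrite Rabs_R0, Rmult_0_r. apply Rabs_pos.
    - pose proof (Hsg_mono s2 s1 h).
      rewrite (Rabs_right (s1 - s2)) by lra.
      pose proof (Rmult_lt_0_compat k (s1 - s2) Hk ltac:(lra)).
      rewrite (Rabs_right (sg tau s1 - sg tau s2)) by lra. lra. }
  assert (Hg_mono : forall y1 y2, y1 <= y2 -> g y1 <= g y2).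
  { intros y1 y2 H. destruct (Rle_lt_dec (g y1) (g y2)) as [h|h]; auto.
    pose proof (Hsg_mono _ _ h). rewrite !Hg in H0.
    pose proof (Rmult_lt_0_compat k (g y1 - g y2) Hk ltac:(lra)). lra. }
  assert (Heta_mono : forall s t, s <= t -> eta alpha s <= eta alpha t).
  { intros s t H. destruct (Req_dec s t) as [->|hne]; [lra|].
    assert (h : s < t) by lra. pose proof (Hslope s t h) as hs.
    set (q := (alpha s - alpha t) / (s - t)) in hs.
    assert (alpha s - alpha t = q * (s - t)) by (unfold q; field; lra).
    unfold eta. nra. }
  set (S := fun w => g (eta alpha w)).
  assert (HSeta : forall w, sg tau (S w) = eta alpha w) by (intro; apply Hg).
  set (P := fun t w => mkpt t ((1 - t) * tau (S w) + t * alpha w) (S w - t * tau (S w) / 2)).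
  set (Z := fun t w => (1 - t) ^ 2 * S w + 2 * t * (1 - t) * eta alpha w + t ^ 2 * w).
  assert (Zid : forall t w, pz (P t w) - t * py (P t w) / 2 = Z t w).
  { intros t w. pose proof (HSeta w) as h. unfold sg, eta in h.
    unfold P, Z, mkpt, px, py, pz, eta; simpl.
    replace (tau (S w)) with (2 * S w - 2 * w - alpha w) by lra. field. }
  assert (Zlow : forall t w1 w2, 0 <= t <= 1 -> w1 <= w2 -> Z t w2 - Z t w1 >= t ^ 2 * (w2 - w1)).
  { intros t w1 w2 Ht Hw. unfold Z.
    assert (h1 : S w1 <= S w2) by (apply Hg_mono, Heta_mono; auto).
    pose proof (Heta_mono _ _ Hw) as h2.
    assert (0 <= (1 - t) ^ 2 * (S w2 - S w1)) by (apply Rmult_le_pos; [apply pow2_ge_0|lra]).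
    assert (0 <= 2 * t * (1 - t) * (eta alpha w2 - eta alpha w1)).
    { apply Rmult_le_pos; [|lra]. apply Rmult_le_pos; lra. }
    lra. }
  assert (Zuniq : forall t w1 w2, 0 <= t <= 1 -> Z t w1 = Z t w2 -> P t w1 = P t w2).
  { intros t w1 w2 Ht HZ. destruct (Req_dec t 0) as [->|ht].
    - unfold Z in HZ. assert (S w1 = S w2) by (simpl in HZ; lra).
      unfold P. rewrite H. apply pt_ext; unfold px, py, pz, mkpt; simpl; field.
    - assert (t2 : 0 < t ^ 2) by (apply pow_lt; lra).
      destruct (Rtotal_order w1 w2) as [h|[h|h]].
      + pose proof (Zlow t w1 w2 Ht ltac:(lra)). pose proof (Rmult_lt_0_compat _ (w2 - w1) t2 ltac:(lra)). lra.
      + subst; reflexivity.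
      + pose proof (Zlow t w2 w1 Ht ltac:(lra)). pose proof (Rmult_lt_0_compat _ (w1 - w2) t2 ltac:(lra)). lra. }
  assert (Zcont : forall t, continuity (Z t)).
  { intros t x. unfold Z, S.
    apply continuity_pt_plus. apply continuity_pt_plus.
    apply continuity_pt_mult. apply continuity_pt_const; intros a b; reflexivity.
    apply (continuity_pt_comp (eta alpha) g). apply eta_cont; auto. apply Hg_cont.
    apply continuity_pt_mult. apply continuity_pt_const; intros a b; reflexivity.
    apply eta_cont; auto.
    apply continuity_pt_mult. apply continuity_pt_const; intros a b; reflexivity.
    apply derivable_continuous_pt; apply derivable_pt_id. }
  assert (Zsurj : forall t z, 0 <= t <= 1 -> exists w, Z t w = z).
  { intros t z Ht. destruct (Req_dec t 0) as [->|ht].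
    - destruct (Heta (sg tau z)) as [w Hw]. exists w. unfold Z, S.
      change (w + alpha w / 2) with (eta alpha w) in Hw. rewrite Hw, Hgsg. ring.
    - assert (t2 : 0 < t ^ 2) by (apply pow_lt; lra).
      set (M := (Rabs (z - Z t 0) + 1) / t ^ 2).
      assert (HM : t ^ 2 * M = Rabs (z - Z t 0) + 1) by (unfold M; field; lra).
      assert (M0 : 0 < M) by (unfold M; apply Rdiv_lt_0_compat; [pose proof (Rabs_pos (z - Z t 0)); lra|lra]).
      pose proof (Zlow t 0 M Ht ltac:(lra)).
      pose proof (Zlow t (-M) 0 Ht ltac:(lra)).
      replace (M - 0) with M in H by ring. replace (0 - - M) with M in H0 by ring.
      pose proof (Rle_abs (z - Z t 0)). pose proof (Rle_abs (- (z - Z t 0))). rewrite Rabs_Ropp in H2.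
      destruct (IVT (fun w => Z t w - z) (-M) M) as [w [_ Hw]].
      + intro x. apply continuity_pt_minus. apply Zcont.
        apply continuity_pt_const; intros a b; reflexivity.
      + lra.
      + simpl. lra.
      + simpl. lra.
      + exists w. simpl in Hw. lra. }
  set (U := fun q => exists t w, 0 <= t <= 1 /\ q = P t w).
  assert (Hseg : forall t w, hmul (P 0 w) (mkpt (t * 1) (t * (alpha w - tau (S w))) 0) = P t w).
  { intros t w. unfold hmul, P, mkpt, px, py, pz; simpl. apply pt_ext; unfold px, py, pz, mkpt; simpl; field. }
  assert (HP1 : forall w, P 1 w = hmul Xpt (mkpt 0 (alpha w) w)).
  { intros w. pose proof (HSeta w) as h. unfold sg, eta in h.
    unfold hmul, P, Xpt, mkpt, px, py, pz; simpl. apply pt_ext; unfold px, py, pz, mkpt; simpl; lra. }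
  assert (HUbd : forall q, graph_boundary U q <-> (gamma tau q \/ Xgamma alpha q)).
  { intros q. split.
    - intros [[t [w [Ht ->]]] Hx]. unfold P, px, mkpt in Hx; simpl in Hx.
      destruct Hx as [-> | ->].
      + left. exists (S w). unfold P, mkpt. apply pt_ext; unfold px, py, pz, mkpt; simpl; field.
      + right. exists (mkpt 0 (alpha w) w). split. exists w; reflexivity. apply HP1.
    - intros [[z ->] | [p [[z ->] ->]]].
      + destruct (Zsurj 0 z ltac:(lra)) as [w Hw].
        unfold Z in Hw. split.
        * assert (Hz : S w = z) by (simpl in Hw; lra). exists 0, w. split. lra. rewrite <- Hz. unfold P. apply pt_ext; unfold px, py, pz, mkpt; simpl; field.
        * left. reflexivity.
      + split.
        * exists 1, z. split. lra. symmetry; apply HP1.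
        * right. unfold hmul, px, Xpt, mkpt; simpl. ring. }
  assert (Hsub : forall S1, ruled_graph_with_boundary tau alpha S1 -> forall q, S1 q -> U q).
  { intros S1 [_ [Hbd Hr]] q Hq.
    destruct (Hr q Hq) as [p [a [b [Hab [Hp [He [_ [t [Ht ->]]]]]]]]].
    apply Hbd in Hp. apply Hbd in He.
    destruct Hp as [[s ->] | [p0 [[u ->] ->]]]; destruct He as [[s' He] | [p1 [[v ->] He]]];
      unfold hmul, Xpt, mkpt, px, py, pz in He; simpl in He; injection He; intros E3 E2 E1.
    - exfalso. apply Hab. assert (a = 0) by lra. subst a.
      assert (b = 0) by (assert (Es : s' = s) by lra; rewrite Es in E2; lra). subst; reflexivity.
    -
      assert (a = 1) by lra. subst a.
      assert (Hs : S v = s).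
      { unfold S.
        replace (eta alpha v) with (sg tau s) by (unfold sg, eta; lra). apply Hgsg. }
      exists t, v. split; auto.
      unfold hmul, P, mkpt, px, py, pz; simpl. rewrite Hs. assert (Eb : b = alpha v - tau s) by lra. rewrite Eb. apply pt_ext; unfold px, py, pz, mkpt; simpl; field.
    -
      assert (a = -1) by lra. subst a.
      assert (Hs : S u = s').
      { unfold S. replace (eta alpha u) with (sg tau s') by (unfold sg, eta; lra). apply Hgsg. }
      exists (1 - t), u. split. lra.
      unfold hmul, P, mkpt, px, py, pz; simpl. rewrite Hs. assert (Eb : b = tau s' - alpha u) by lra. rewrite Eb. apply pt_ext; unfold px, py, pz, mkpt; simpl; lra.
    - exfalso. apply Hab. assert (a = 0) by lra. subst a.
      assert (E : v = u) by lra. subst v.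
      assert (b = 0) by lra. subst; reflexivity. }
  assert (Hsup : forall S1, ruled_graph_with_boundary tau alpha S1 -> forall q, U q -> S1 q).
  { intros S1 HS1 q [t [w [Ht ->]]].
    pose proof HS1 as [[f1 Hf1] _].
    set (q' := hmul (mkpt t 0 (Z t w)) (Ypow (f1 t (Z t w)))).
    assert (Hq' : S1 q').
    { apply Hf1. exists t, (Z t w). split. exact Ht. reflexivity. }
    destruct (Hsub S1 HS1 q' Hq') as [t' [w' [Ht' Heq]]].
    assert (Et : t' = t).
    { apply (f_equal px) in Heq. unfold q', hmul, P, Ypow, mkpt, px in Heq; simpl in Heq. lra. }
    subst t'.
    assert (EZ : Z t w' = Z t w).
    { rewrite <- Zid. rewrite <- Heq. unfold q', hmul, Ypow, mkpt, px, py, pz; simpl. field. }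
    rewrite <- (Zuniq t w' w Ht EZ), <- Heq. exact Hq'. }
  split.
  - exists U. split; [|split].
    + destruct (choice_fun (fun (p : R * R) w => 0 <= fst p <= 1 -> Z (fst p) w = snd p)) as [W HW].
      { intros [x z]. simpl. destruct (Rle_dec 0 x); [destruct (Rle_dec x 1)|].
        - destruct (Zsurj x z ltac:(lra)) as [w Hw]. exists w. auto.
        - exists 0. intros; lra.
        - exists 0. intros; lra. }
      exists (fun x z => py (P x (W (x, z)))). intros q. split.
      * intros [t [w [Ht ->]]]. exists t, (Z t w). split. exact Ht.
        specialize (HW (t, Z t w) Ht). simpl in HW.
        rewrite (Zuniq t (W (t, Z t w)) w Ht HW).
        pose proof (Zid t w).
        apply pt_ext; unfold hmul, Ypow, P, mkpt, px, py, pz in *; simpl in *; lra.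
      * intros [x [z [Hx ->]]]. exists x, (W (x, z)). split. exact Hx.
        specialize (HW (x, z) Hx). simpl in HW.
        pose proof (Zid x (W (x, z))). rewrite HW in H.
        apply pt_ext; unfold hmul, Ypow, P, mkpt, px, py, pz in *; simpl in *; lra.
    + exact HUbd.
    + intros q [t [w [Ht ->]]].
      exists (P 0 w), 1, (alpha w - tau (S w)). split; [|split; [|split; [|split]]].
      * intro h. injection h. lra.
      * apply HUbd. left. exists (S w). unfold P, mkpt. apply pt_ext; unfold px, py, pz, mkpt; simpl; field.
      * apply HUbd. right. exists (mkpt 0 (alpha w) w). split. exists w; reflexivity.
        rewrite <- HP1. rewrite <- (Hseg 1 w). f_equal. unfold mkpt. apply pt_ext; unfold px, py, pz, mkpt; simpl; field.
      * intros r [s [Hs ->]]. exists s, w. split. exact Hs. apply Hseg.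
      * exists t. split. exact Ht. symmetry. apply Hseg.
  - intros S1 S2 H1 H2 q. split; intro h.
    + apply (Hsup S2 H2). apply (Hsub S1 H1). exact h.
    + apply (Hsup S1 H1). apply (Hsub S2 H2). exact h.
Qed.
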